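(* Consider the reaction network (BIII) on the fourteen species $\mathrm{NE}_i,\mathrm{NI}_i,\mathrm{N}_i,\mathrm{D}_{si},\mathrm{D}_i,\mathrm{T}_i,\mathrm{B}_i$ ($i=1,2$) with irreversible reactions \[ \begin{aligned} &11:\ \mathrm{NI}_1+\mathrm{NE}_1\to\mathrm{N}_1, && 21:\ \mathrm{NI}_2+\mathrm{NE}_2\to\mathrm{N}_2,\\ &12:\ \mathrm{N}_1+\mathrm{D}_2\to\mathrm{NI}_1+\mathrm{T}_2, && 22:\ \mathrm{N}_2+\mathrm{D}_1\to\mathrm{NI}_2+\mathrm{T}_1,\\ &16:\ \mathrm{N}_1+\mathrm{D}_{s2}\to\mathrm{B}_2, && 26:\ \mathrm{N}_2+\mathrm{D}_{s1}\to\mathrm{B}_1,\\ &17:\ \mathrm{B}_2\to\mathrm{N}_1+\mathrm{D}_{s2}, && 27:\ \mathrm{B}_1\to\mathrm{N}_2+\mathrm{D}_{s1},\\ &18:\ \mathrm{D}_{s1}\to\mathrm{D}_1, && 28:\ \mathrm{D}_{s2}\to\mathrm{D}_2,\\ &19:\ \mathrm{T}_1\to\mathrm{NE}_1+\mathrm{D}_{s1}, && 29:\ \mathrm{T}_2\to\mathrm{NE}_2+\mathrm{D}_{s2}, \end{aligned} \] and the associated ODE system \[ \begin{cases} [\dot{\mathrm{NE}}_1]=-r_{11}([\mathrm{NI}_1],[\mathrm{NE}_1])+r_{19}([\mathrm{T}_1]),\\ [\dot{\mathrm{NI}}_1]=r_{12}([\mathrm{N}_1],[\mathrm{D}_2])-r_{11}([\mathrm{NI}_1],[\mathrm{NE}_1]),\\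 [\dot{\mathrm{N}}_1]=-r_{12}([\mathrm{N}_1],[\mathrm{D}_2])+r_{11}([\mathrm{NI}_1],[\mathrm{NE}_1])-r_{16}([\mathrm{N}_1],[\mathrm{D}_{s2}])+r_{17}([\mathrm{B}_2]),\\ [\dot{\mathrm{D}}_{s1}]=r_{19}([\mathrm{T}_1])-r_{26}([\mathrm{N}_2],[\mathrm{D}_{s1}])+r_{27}([\mathrm{B}_1])-r_{18}([\mathrm{D}_{s1}]),\\ [\dot{\mathrm{D}}_1]=r_{18}([\mathrm{D}_{s1}])-r_{22}([\mathrm{N}_2],[\mathrm{D}_1]),\\ [\dot{\mathrm{T}}_1]=-r_{19}([\mathrm{T}_1])+r_{22}([\mathrm{N}_2],[\mathrm{D}_1]),\\ [\dot{\mathrm{B}}_1]=r_{26}([\mathrm{N}_2],[\mathrm{D}_{s1}])-r_{27}([\mathrm{B}_1]),\\ [\dot{\mathrm{NE}}_2]=-r_{21}([\mathrm{NI}_2],[\mathrm{NE}_2])+r_{29}([\mathrm{T}_2]),\\ [\dot{\mathrm{NI}}_2]=r_{22}([\mathrm{N}_2],[\mathrm{D}_1])-r_{21}([\mathrm{NI}_2],[\mathrm{NE}_2]),\\ [\dot{\mathrm{N}}_2]=-r_{26}([\mathrm{N}_2],[\mathrm{D}_{s1}])+r_{27}([\mathrm{B}_1])-r_{22}([\mathrm{N}_2],[\mathrm{D}_1])+r_{21}([\mathrm{NI}_2],[\mathrm{NE}_2]),\\ [\dot{\mathrm{D}}_{s2}]=r_{29}([\mathrm{T}_2])-r_{16}([\mathrm{N}_1],[\mathrm{D}_{s2}])+r_{17}([\mathrm{B}_2])-r_{28}([\mathrm{D}_{s2}]),\\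 [\dot{\mathrm{D}}_2]=-r_{12}([\mathrm{N}_1],[\mathrm{D}_2])+r_{28}([\mathrm{D}_{s2}]),\\ [\dot{\mathrm{T}}_2]=r_{12}([\mathrm{N}_1],[\mathrm{D}_2])-r_{29}([\mathrm{T}_2]),\\ [\dot{\mathrm{B}}_2]=r_{16}([\mathrm{N}_1],[\mathrm{D}_{s2}])-r_{17}([\mathrm{B}_2]), \end{cases} \] with the kinetic symmetry constraints $r_{1k}\equiv r_{2k}$ for $k=1,2,6,7,8,9$. Then the system has the capacity for zero-eigenvalue bifurcations and thus for differentiation. Moreover, up to the symmetry swapping the cell indices $1\leftrightarrow2$, there is exactly one instability motif associated to an unstable-positive feedback, namely, for $(j,k)=(1,2)$ and $(j,k)=(2,1)$, the subnetwork with species $\{\mathrm{N}_j,\mathrm{D}_{sk},\mathrm{D}_k,\mathrm{T}_k\}$ and reactions $\{j2,\ j6,\ k8,\ k9\}$ (i.e. $\mathrm{N}_j+\mathrm{D}_k\to\mathrm{T}_k+\dots$, $\mathrm{N}_j+\mathrm{D}_{sk}\to\dots$, $\mathrm{D}_{sk}\to\mathrm{D}_k$, $\mathrm{T}_k\to\mathrm{D}_{sk}+\dots$). This motif identifies non-autocatalytic positive feedback, and the network (BIII) is non-autocatalytic.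
   Context: General setting. A reaction network has species $X_1,\dots,X_M$ and irreversible reactions $j:\ \sum_m s^j_m X_m\to\sum_m \tilde s^j_m X_m$ with nonnegative stoichiometric coefficients; $X_m$ is a reactant of $j$ if $s^j_m>0$. The stoichiometric matrix is $S_{mj}=\tilde s^j_m-s^j_m$; the ODE system is $\dot x=S\mathbf r(x)$ with rates $r_j$ that are monotone chemical: (i) $r_j\ge0$ on $\mathbb R^M_{\ge0}$; (ii) $r_j(x)>0$ iff $x_m>0$ for all reactants $X_m$ of $j$; (iii) $\partial r_j/\partial x_m\equiv0$ if $X_m$ is not a reactant of $j$; (iv) $\partial r_j/\partial x_m>0$ for $x>0$ and $X_m$ a reactant of $j$. Kinetics are assumed parameter-rich: at any positive steady state the partial derivatives $\partial r_j/\partial x_m$ (for reactants) can be prescribed as arbitrary positive numbers. Symbolic analysis: $R$ is the symbolic reactivity matrix ($R_{jm}=r_{jm}>0$ a symbol if $X_m$ is a reactant of $j$, else $0$), $G=SR$ the symbolic Jacobian, $n=\dim\ker S^T$, and $a_{M-n}$ the sum of the principal minors of order $M-n$ of $G$ (for a nondegenerate network, the determinant of the Jacobian restricted to a stoichiometric compatibility class $(x_0+\operatorname{Im}S)\cap\mathbb R^M_{>0}$). The network has the capacity for zero-eigenvalue bifurcation (differentiation) if there exist positive symbol values with $a_{M-n}=0$ satisfying kinetic symmetry at a homogeneous steady state, i.e. $r_{jm}=r_{\sigma(j)\sigma(m)}$ where $\sigma$ swaps cell indices $1\leftrightarrow2$ of reactions and species. A $k$-Child-Selection (CS) triple $(\kappa,E_\kappa,J)$: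 $k$ species $\kappa$, $k$ reactions $E_\kappa$, bijection $J:\kappa\to E_\kappa$ with each $X_m\in\kappa$ a reactant of $J(X_m)$; its CS-matrix is $S[\kappa]_{ml}=S_{m,J(X_l)}$, $X_m,X_l\in\kappa$. An unstable-positive feedback is a $k\times k$ CS-matrix with $\operatorname{sign}\det S[\kappa]=(-1)^{k-1}$ such that no principal $k'\times k'$ submatrix, $k'<k$, has determinant of sign $(-1)^{k'-1}$. Its instability motif is the subnetwork with species $\kappa$ and reactions $E_\kappa$ (other species are disregarded). An unstable-positive feedback is autocatalytic if it is a Metzler matrix (nonnegative off-diagonal entries); a network is autocatalytic if it has an autocatalytic unstable-positive feedback, non-autocatalytic otherwise. *)

(* Defs.v *)
From HB Require Import structures.
From mathcomp Require Import all_boot all_order all_algebra.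
From mathcomp Require Import reals.
Set Implicit Arguments.
Unset Strict Implicit.
Unset Printing Implicit Defensive.
Import Order.TTheory GRing.Theory Num.Theory.
Local Open Scope ring_scope.

Definition NE1 := 0%N.  Definition NI1 := 1%N.  Definition N1 := 2%N.
Definition Ds1 := 3%N.  Definition D1 := 4%N.   Definition T1 := 5%N.
Definition B1 := 6%N.
Definition NE2 := 7%N.  Definition NI2 := 8%N.  Definition N2 := 9%N.
Definition Ds2 := 10%N. Definition D2 := 11%N.  Definition T2 := 12%N.
Definition B2 := 13%N.

Definition R11 := 0%N. Definition R12 := 1%N. Definition R16 := 2%N.
Definition R17 := 3%N. Definition R18 := 4%N. Definition R19 := 5%N.
Definition R21 := 6%N. Definition R22 := 7%N. Definition R26 := 8%N.
Definition R27 := 9%N. Definition R28 := 10%N. Definition R29 := 11%N.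

Definition lhs_list : seq (seq nat) :=
  [:: [:: NI1; NE1]   (* 11: NI1 + NE1 -> N1 *)
    ; [:: N1; D2]     (* 12: N1 + D2 -> NI1 + T2 *)
    ; [:: N1; Ds2]    (* 16: N1 + Ds2 -> B2 *)
    ; [:: B2]         (* 17: B2 -> N1 + Ds2 *)
    ; [:: Ds1]        (* 18: Ds1 -> D1 *)
    ; [:: T1]         (* 19: T1 -> NE1 + Ds1 *)
    ; [:: NI2; NE2]   (* 21: NI2 + NE2 -> N2 *)
    ; [:: N2; D1]     (* 22: N2 + D1 -> NI2 + T1 *)
    ; [:: N2; Ds1]    (* 26: N2 + Ds1 -> B1 *)
    ; [:: B1]         (* 27: B1 -> N2 + Ds1 *)
    ; [:: Ds2]        (* 28: Ds2 -> D2 *)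
    ; [:: T2]         (* 29: T2 -> NE2 + Ds2 *) ].

Definition rhs_list : seq (seq nat) :=
  [:: [:: N1]
    ; [:: NI1; T2]
    ; [:: B2]
    ; [:: N1; Ds2]
    ; [:: D1]
    ; [:: NE1; Ds1]
    ; [:: N2]
    ; [:: NI2; T1]
    ; [:: B1]
    ; [:: N2; Ds1]
    ; [:: D2]
    ; [:: NE2; Ds2] ].

Definition nS := 14%N.
Definition nR := 12%N.

Definition s_coef (j : 'I_nR) (m : 'I_nS) : nat :=
  count_mem (m : nat) (nth [::] lhs_list j).
Definition st_coef (j : 'I_nR) (m : 'I_nS) : nat :=
  count_mem (m : nat) (nth [::] rhs_list j).

Definition is_reactant (j : 'I_nR) (m : 'I_nS) : bool := (0 < s_coef j m)%N.

Definition Smx : 'M[int]_(nS, nR) :=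
  \matrix_(m < nS, j < nR) ((st_coef j m)%:Z - (s_coef j m)%:Z).

(* the cell swap sigma : 1 <-> 2 on species and reactions *)
Definition sig_sp (m : 'I_nS) : 'I_nS := inord ((m + 7) %% 14).
Definition sig_re (j : 'I_nR) : 'I_nR := inord ((j + 6) %% 12).

Definition psubmx (T : Type) (k : nat) (A : 'M[T]_k) (I : {set 'I_k})
  : 'M[T]_#|I| :=
  \matrix_(i < #|I|, l < #|I|) A (enum_val i) (enum_val l).

Definition pminor_sum (R : comRingType) (k p : nat) (A : 'M[R]_k) : R :=
  \sum_(I : {set 'I_k} | #|I| == p) \det (psubmx A I).

Section Symbolic.
Variable R : realType.

Definition S_R : 'M[R]_(nS, nR) := map_mx (fun z : int => z%:~R) Smx.

Definition reactivity (r : 'I_nR -> 'I_nS -> R) : 'M[R]_(nR, nS) :=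
  \matrix_(j < nR, m < nS) (if is_reactant j m then r j m else 0).

Definition Gmx (r : 'I_nR -> 'I_nS -> R) : 'M[R]_nS := S_R *m reactivity r.

(* n = dim ker S^T (the left kernel of S) *)
Definition n_cons : nat := \rank (kermx S_R).

Definition zero_eig_capacity : Prop :=
  exists r : 'I_nR -> 'I_nS -> R,
    [/\ (forall j m, is_reactant j m -> 0 < r j m),
        (forall j m, is_reactant j m -> r j m = r (sig_re j) (sig_sp m)) &
        pminor_sum (nS - n_cons) (Gmx r) = 0].
End Symbolic.

Definition CS_triple (kap : {set 'I_nS}) (J : 'I_nS -> 'I_nR) : Prop :=
  {in kap &, injective J} /\ (forall m, m \in kap -> is_reactant (J m) m).

Definition CSmx (kap : {set 'I_nS}) (J : 'I_nS -> 'I_nR) : 'M[int]_#|kap| :=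
  \matrix_(i < #|kap|, l < #|kap|) Smx (enum_val i) (J (enum_val l)).

Definition sign_alt (k : nat) (d : int) : bool := 0 < (-1) ^+ k.-1 * d.

Definition unstable_positive_feedback (kap : {set 'I_nS}) (J : 'I_nS -> 'I_nR)
  : Prop :=
  [/\ CS_triple kap J, (0 < #|kap|)%N,
      sign_alt #|kap| (\det (CSmx kap J)) &
      forall I : {set 'I_#|kap|}, (0 < #|I| < #|kap|)%N ->
        ~~ sign_alt #|I| (\det (psubmx (CSmx kap J) I))].

Definition motif (kap : {set 'I_nS}) (J : 'I_nS -> 'I_nR)
  : {set 'I_nS} * {set 'I_nR} := (kap, J @: kap).

Definition Metzler (k : nat) (A : 'M[int]_k) : Prop :=
  forall i l, i != l -> 0 <= A i l.

Definition autocatalytic_UPF (kap : {set 'I_nS}) (J : 'I_nS -> 'I_nR) : Prop :=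
  unstable_positive_feedback kap J /\ Metzler (CSmx kap J).

Definition non_autocatalytic_network : Prop :=
  ~ exists kap J, autocatalytic_UPF kap J.

Definition spset (l : seq nat) : {set 'I_nS} := [set m : 'I_nS | (m : nat) \in l].
Definition reset (l : seq nat) : {set 'I_nR} := [set j : 'I_nR | (j : nat) \in l].

Definition motif12 : {set 'I_nS} * {set 'I_nR} :=
  (spset [:: N1; Ds2; D2; T2], reset [:: R12; R16; R28; R29]).
Definition motif21 : {set 'I_nS} * {set 'I_nR} :=
  (spset [:: N2; Ds1; D1; T1], reset [:: R22; R26; R18; R19]).

(* Main.v *)
Require Import Defs.
From HB Require Import structures.
From mathcomp Require Import all_boot all_order all_algebra.
From mathcomp Require Import reals.
(* Proof by verified computation (Laplace determinants on lists). *)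
Set Implicit Arguments. Unset Strict Implicit. Unset Printing Implicit Defensive.
Import Order.TTheory GRing.Theory Num.Theory.
Local Open Scope ring_scope.

Definition Sf (x y : nat) : int :=
  (count_mem x (nth [::] rhs_list y))%:Z - (count_mem x (nth [::] lhs_list y))%:Z.
Definition drop_at (j : nat) (s : seq nat) := take j s ++ drop j.+1 s.
Fixpoint ldetf (f : nat -> nat -> int) (rows cols : seq nat) {struct rows} : int :=
  match rows with
  | [::] => 1
  | r :: rs => foldr (fun j acc =>
       (let a := f r (nth 0%N cols j) in
        if a == 0 then 0 else (-1) ^+ j * a * ldetf f rs (drop_at j cols)) + acc)
       0 (iota 0 (size cols))
  end.

Lemma sum_enumT (T : finType) (F : T -> int) : \sum_(i : T) F i = \sum_(i <- enum T) F i.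
Proof. by rewrite enumT. Qed.

Lemma foldr_sum (T : Type) (F : T -> int) (s : seq T) :
  \sum_(i <- s) F i = foldr (fun i acc => F i + acc) 0 s.
Proof. by elim: s => [|x s IH]; rewrite ?big_nil ?big_cons ?IH. Qed.

Lemma sum_ord_foldr n (F : nat -> int) :
  \sum_(i < n) F i = foldr (fun i acc => F i + acc) 0 (iota 0 n).
Proof. by rewrite -foldr_sum -(big_mkord xpredT) /index_iota subn0. Qed.

Lemma size_drop_at j s : (j < size s)%N -> size (drop_at j s) = (size s).-1.
Proof.
move=> Hj; rewrite /drop_at size_cat size_take size_drop Hj.
by case: (size s) Hj => // n; rewrite ltnS => Hj; rewrite subSS subnKC.
Qed.

Lemma nth_drop_at j s k : (j < size s)%N ->
  nth 0%N (drop_at j s) k = nth 0%N s (bump j k).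
Proof.
move=> Hj; rewrite /drop_at nth_cat size_take Hj /bump.
case: ltnP => Hk.
  by rewrite nth_take.
by rewrite nth_drop addSn subnKC.
Qed.

Lemma ldetfE n (A : 'M[int]_n) (f : nat -> nat -> int) rows cols :
  size rows = n -> size cols = n ->
  (forall i j : 'I_n, A i j = f (nth 0%N rows i) (nth 0%N cols j)) ->
  \det A = ldetf f rows cols.
Proof.
elim: n A rows cols => [|n IH] A rows cols.
  by case: rows => // _ _ _; rewrite det_mx00.
case: rows => // r rs /= [Hr] Hc HA.
rewrite (expand_det_row _ ord0) Hc -sum_ord_foldr.
apply: eq_bigr => j _ /=.
rewrite HA /=.
case: eqP => [->|Ha]; first by rewrite mul0r.
have Hj : (j < size cols)%N by rewrite Hc.
rewrite /cofactor add0n (IH _ rs (drop_at j cols)) //.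
- by rewrite mulrA (mulrC (f r _)).
- by rewrite size_drop_at Hc.
move=> i k; rewrite !mxE HA lift0 /= nth_drop_at //.
Qed.

Definition mI n (I : {set 'I_n}) : bitseq := [seq i \in I | i <- enum 'I_n].

Lemma size_mI n (I : {set 'I_n}) : size (mI I) = n.
Proof. by rewrite size_map size_enum_ord. Qed.

Lemma enum_mI n (I : {set 'I_n}) : map val (enum I) = mask (mI I) (iota 0 n).
Proof.
rewrite /enum_mem -enumT filter_mask map_mask val_enum_ord.
by congr mask; apply: eq_map.
Qed.

Lemma card_mI n (I : {set 'I_n}) : #|I| = count id (mI I).
Proof.
by rewrite cardE -(size_map val) enum_mI size_mask // size_mI size_iota.
Qed.

Lemma nth_mI n (I : {set 'I_n}) (i : 'I_n) : nth false (mI I) i = (i \in I).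
Proof. by rewrite (nth_map i) ?size_enum_ord // nth_ord_enum. Qed.

Lemma mI_inj n : injective (@mI n).
Proof. by move=> I1 I2 E; apply/setP => i; rewrite -!nth_mI E. Qed.

Lemma mI_surj n (m : bitseq) : size m = n -> exists I : {set 'I_n}, mI I = m.
Proof.
move=> Hm; exists [set i : 'I_n | nth false m i].
rewrite /mI (eq_map (g := fun i : 'I_n => nth false m i)); last by move=> i; rewrite inE.
by rewrite (map_comp (nth false m) val) val_enum_ord -Hm -/(mkseq _ _) mkseq_nth.
Qed.

Fixpoint allmasks (n : nat) : seq bitseq :=
  match n with
  | 0 => [:: [::]]
  | n.+1 => [seq true :: m | m <- allmasks n] ++ [seq false :: m | m <- allmasks n]
  end.

Lemma mem_allmasks n m : (m \in allmasks n) = (size m == n).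
Proof.
elim: n m => [|n IH] m; first by case: m.
case: m => [|b m] /=.
  by rewrite mem_cat; apply/norP; split; apply/mapP => [] [].
have cinj (c : bool) : injective (cons c) by move=> x y [].
rewrite mem_cat; case: b.
  rewrite (mem_map (cinj true)) IH.
  by apply/orb_idr => /mapP [].
rewrite (mem_map (cinj false)) IH.
by apply/orb_idl => /mapP [].
Qed.

Lemma uniq_allmasks n : uniq (allmasks n).
Proof.
elim: n => //= n IH.
have cinj (c : bool) : injective (cons c) by move=> x y [].
rewrite cat_uniq !(map_inj_uniq (cinj _)) IH /= andbT.
by apply/hasPn => x /mapP [y _ ->]; apply/mapP => [] [].
Qed.

Lemma sum_sets n (H : bitseq -> int) :
  \sum_(I : {set 'I_n}) H (mI I) = \sum_(m <- allmasks n) H m.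
Proof.
rewrite sum_enumT -(big_map (@mI n) xpredT H).
apply: perm_big; apply: uniq_perm.
- by rewrite map_inj_uniq ?enum_uniq //; apply: mI_inj.
- exact: uniq_allmasks.
move=> m; rewrite mem_allmasks; apply/mapP/eqP => [[I _ ->]|Hm].
  exact: size_mI.
by have [I HI] := mI_surj Hm; exists I; rewrite ?mem_enum.
Qed.

Section Psub.
Variables (n : nat) (A : 'M[int]_n) (f : nat -> nat -> int) (rows cols : seq nat).
Hypotheses (Hr : size rows = n) (Hc : size cols = n)
  (HA : forall i j : 'I_n, A i j = f (nth 0%N rows i) (nth 0%N cols j)).

Lemma mask_nth_enum (s : seq nat) (I : {set 'I_n}) (i : 'I_#|I|) :
  size s = n -> nth 0%N (mask (mI I) s) i = nth 0%N s (enum_val i).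
Proof.
move=> Hs.
have -> : mask (mI I) s = map (nth 0%N s) (map val (enum I)).
  have Hm : mkseq (nth 0%N s) n = s by rewrite -Hs mkseq_nth.
  by rewrite enum_mI map_mask -/(mkseq _ _) Hm.
rewrite (nth_map 0%N); last by rewrite size_map -cardE.
by rewrite (nth_map (enum_val i)) -?cardE // -enum_val_nth.
Qed.

Lemma det_psub (I : {set 'I_n}) :
  \det (psubmx A I) = ldetf f (mask (mI I) rows) (mask (mI I) cols).
Proof.
apply: ldetfE.
- by rewrite size_mask ?size_mI // -card_mI.
- by rewrite size_mask ?size_mI // -card_mI.
by move=> i j; rewrite mxE HA !mask_nth_enum.
Qed.

Lemma pminor_sumE p :
  pminor_sum p A = \sum_(m <- allmasks n)
     (if count id m == p then ldetf f (mask m rows) (mask m cols) else 0).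
Proof.
rewrite /pminor_sum big_mkcond /= -sum_sets.
by apply: eq_bigr => I _; rewrite det_psub card_mI.
Qed.
End Psub.

Definition ksl (kap : {set 'I_nS}) : seq nat := map val (enum kap).
Definition jsl (kap : {set 'I_nS}) (J : 'I_nS -> 'I_nR) : seq nat :=
  map (fun x => val (J x)) (enum kap).

Lemma size_ksl kap : size (ksl kap) = #|kap|.
Proof. by rewrite size_map cardE. Qed.
Lemma size_jsl kap J : size (jsl kap J) = #|kap|.
Proof. by rewrite size_map cardE. Qed.

Lemma CS_entry (kap : {set 'I_nS}) (J : 'I_nS -> 'I_nR) (i l : 'I_#|kap|) :
  CSmx kap J i l = Sf (nth 0%N (ksl kap) i) (nth 0%N (jsl kap J) l).
Proof.
rewrite !mxE /ksl /jsl (nth_map (enum_val i)) -?cardE //.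
by rewrite (nth_map (enum_val l)) -?cardE // -!enum_val_nth.
Qed.

Lemma UPF_iff (kap : {set 'I_nS}) (J : 'I_nS -> 'I_nR) : unstable_positive_feedback kap J <->
  [/\ CS_triple kap J, (0 < size (ksl kap))%N,
      sign_alt (size (ksl kap)) (ldetf Sf (ksl kap) (jsl kap J)) &
      forall m, size m = size (ksl kap) -> (0 < count id m < size (ksl kap))%N ->
        ~~ sign_alt (count id m) (ldetf Sf (mask m (ksl kap)) (mask m (jsl kap J)))].
Proof.
have Hs := size_ksl kap; have Hj := size_jsl kap J; have HA := @CS_entry kap J.
have Hd : \det (CSmx kap J) = ldetf Sf (ksl kap) (jsl kap J) by apply: ldetfE.
rewrite Hs -Hd.
split => [[Hcs Hpos Hsa Hsub]|[Hcs Hpos Hsa Hsub]]; split => //.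
  move=> m Hm Hc; have [I HI] := mI_surj Hm.
  by move: (Hsub I); rewrite (det_psub Hs Hj HA) card_mI HI; apply.
move=> I HI; rewrite (det_psub Hs Hj HA) card_mI; apply: Hsub.
  by rewrite size_mI.
by rewrite -card_mI.
Qed.

Definition reacts (x : nat) : seq nat :=
  [seq j <- iota 0 12 | (0 < count_mem x (nth [::] lhs_list j))%N].
Fixpoint choices (ks : seq nat) : seq (seq nat) :=
  match ks with
  | [::] => [:: [::]]
  | x :: xs => flatten [seq [seq j :: c | c <- choices xs] | j <- reacts x]
  end.
Definition bad (ks js : seq nat) := sign_alt (size ks) (ldetf Sf ks js).
Definition U12 : seq nat * seq nat := ([:: 2; 10; 11; 12], [:: 2; 10; 1; 11])%N.
Definition U21 : seq nat * seq nat := ([:: 3; 4; 5; 9], [:: 4; 7; 5; 8])%N.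
Definition sub_ok (U : seq nat * seq nat) ks js :=
  let w := [seq x \in U.1 | x <- ks] in
  [&& mask w ks == U.1, mask w js == U.2 & (size U.1 < size ks)%N].
Definition check ks js :=
  if (0 < size ks)%N && bad ks js then
    [|| (ks, js) == U12, (ks, js) == U21, sub_ok U12 ks js | sub_ok U21 ks js]
  else true.
Definition big_check :=
  all (fun m => all (fun js => if uniq js then check (mask m (iota 0 14)) js else true)
                    (choices (mask m (iota 0 14)))) (allmasks 14).

Lemma big_check_ok : big_check.
Proof. vm_compute. reflexivity. Qed.

Lemma choices_complete ks js :
  all2 (fun x j => j \in reacts x) ks js -> js \in choices ks.
Proof.
elim: ks js => [|x ks IH] [|j js] //= /andP [Hj Hr].
apply/flattenP; exists [seq j :: c | c <- choices ks].
  by apply/mapP; exists j.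
by apply/mapP; exists js => //; apply: IH.
Qed.

Lemma all2_map (T : Type) (P : nat -> nat -> bool) (f g : T -> nat) s :
  all2 P (map f s) (map g s) = all (fun x => P (f x) (g x)) s.
Proof. by elim: s => //= x s ->. Qed.

Lemma CS_lists kap J : CS_triple kap J ->
  [/\ ksl kap = mask (mI kap) (iota 0 14), jsl kap J \in choices (ksl kap)
    & uniq (jsl kap J)].
Proof.
case=> Hinj Hre; split.
- exact: enum_mI.
- apply: choices_complete; rewrite all2_map; apply/allP => x; rewrite mem_enum => Hx.
  by rewrite mem_filter mem_iota /= ltn_ord andbT; apply: Hre.
rewrite /jsl map_inj_in_uniq ?enum_uniq // => x y; rewrite !mem_enum => Hx Hy /val_inj.
exact: Hinj.
Qed.

Lemma bad_U12 : bad U12.1 U12.2. Proof. by vm_compute. Qed.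
Lemma bad_U21 : bad U21.1 U21.2. Proof. by vm_compute. Qed.

Lemma sub_contra U ks js : bad U.1 U.2 -> size U.1 = 4%N ->
  (forall m, size m = size ks -> (0 < count id m < size ks)%N ->
        ~~ sign_alt (count id m) (ldetf Sf (mask m ks) (mask m js))) ->
  sub_ok U ks js -> False.
Proof.
move=> Hb H4 Hsub /and3P [/eqP Hk /eqP Hj Hsz].
set w := [seq x \in U.1 | x <- ks] in Hk Hj.
have Hw : size w = size ks by rewrite size_map.
have Hc : count id w = size U.1 by rewrite -Hk size_mask.
move: (Hsub w Hw); rewrite Hc Hk Hj Hsz andbT ; have H0 : (0 < size U.1)%N by rewrite H4.
move=> /(_ H0).
by rewrite -/(bad U.1 U.2) Hb.
Qed.

Lemma UPF_class kap J : unstable_positive_feedback kap J ->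
  (ksl kap, jsl kap J) = U12 \/ (ksl kap, jsl kap J) = U21.
Proof.
move=> H; have [Hcs Hpos Hsa Hsub] := (UPF_iff kap J).1 H.
have [Hk Hjc Hu] := CS_lists Hcs.
have := allP big_check_ok (mI kap); rewrite mem_allmasks size_mI => /(_ isT).
rewrite -Hk => /allP /(_ _ Hjc); rewrite Hu /check Hpos /bad Hsa /=.
case/or4P => [/eqP ->|/eqP ->|Hs|Hs]; [by left|by right| |].
  by exfalso; apply: (sub_contra bad_U12 _ Hsub Hs).
by exfalso; apply: (sub_contra bad_U21 _ Hsub Hs).
Qed.

Lemma kap_eq (kap : {set 'I_nS}) : kap = spset (ksl kap).
Proof.
apply/setP => x; rewrite [in RHS]in_set.
by rewrite /ksl (mem_map val_inj) mem_enum.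
Qed.
Lemma im_eq (kap : {set 'I_nS}) (J : 'I_nS -> 'I_nR) : J @: kap = reset (jsl kap J).
Proof.
apply/setP => x; rewrite [in RHS]in_set.
apply/imsetP/mapP => [[y Hy ->]|[y Hy /val_inj ->]].
  by exists y; rewrite ?mem_enum.
by exists y; rewrite // -mem_enum.
Qed.
Lemma motif_of (kap : {set 'I_nS}) (J : 'I_nS -> 'I_nR) :
  motif kap J = (spset (ksl kap), reset (jsl kap J)).
Proof. by rewrite /motif -kap_eq -im_eq. Qed.

Lemma spset_eq l1 l2 : l1 =i l2 -> spset l1 = spset l2.
Proof. by move=> E; apply/setP => x; rewrite [x \in spset l1]in_set [x \in spset l2]in_set E. Qed.
Lemma reset_eq l1 l2 : l1 =i l2 -> reset l1 = reset l2.
Proof. by move=> E; apply/setP => x; rewrite [x \in reset l1]in_set [x \in reset l2]in_set E. Qed.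

Lemma motif_U12 kap J : (ksl kap, jsl kap J) = U12 -> motif kap J = motif12.
Proof.
move=> E; rewrite motif_of.
have [-> ->] : ksl kap = U12.1 /\ jsl kap J = U12.2 by rewrite -E.
rewrite /motif12; congr pair.
by apply: reset_eq; apply: perm_mem; vm_compute.
Qed.
Lemma motif_U21 kap J : (ksl kap, jsl kap J) = U21 -> motif kap J = motif21.
Proof.
move=> E; rewrite motif_of.
have [-> ->] : ksl kap = U21.1 /\ jsl kap J = U21.2 by rewrite -E.
rewrite /motif21; congr pair.
  by apply: spset_eq; apply: perm_mem; vm_compute.
by apply: reset_eq; apply: perm_mem; vm_compute.
Qed.

Lemma ksl_spset l : ksl (spset l) = [seq x <- iota 0 14 | x \in l].
Proof.
rewrite /ksl enum_mI /mI (eq_map (g := fun i : 'I_nS => (val i) \in l)); last first.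
  by move=> i; rewrite [i \in spset l]in_set.
by rewrite (map_comp (fun x => x \in l) val) val_enum_ord -filter_mask.
Qed.

Definition Jof (U : seq nat * seq nat) (n : nat) : nat := nth 0%N U.2 (index n U.1).
Definition JU (U : seq nat * seq nat) (x : 'I_nS) : 'I_nR := inord (Jof U x).

Lemma val_JU U x : all (fun j => j < 12)%N U.2 -> val (JU U x) = Jof U x.
Proof.
move=> HU; rewrite /JU /= inordK //; rewrite /Jof.
case: (ltnP (index (val x) U.1) (size U.2)) => H.
  by apply: (allP HU); apply: mem_nth.
by rewrite nth_default.
Qed.

Lemma UPF_U U : U = U12 \/ U = U21 ->
  unstable_positive_feedback (spset U.1) (JU U) /\ (ksl (spset U.1), jsl (spset U.1) (JU U)) = U.
Proof.
move=> HU.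
have Hlt : all (fun j => j < 12)%N U.2 by case: (HU) => ->.
have Hk : ksl (spset U.1) = U.1 by rewrite ksl_spset; case: (HU) => ->; vm_compute.
have Hj : jsl (spset U.1) (JU U) = U.2.
  rewrite /jsl (eq_map (g := fun x => Jof U (val x))); last by move=> x; apply: val_JU.
  by rewrite (map_comp (Jof U) val) -/(ksl _) Hk; case: (HU) => ->; vm_compute.
split; last by rewrite Hk Hj; case: (U) => ? ?.
apply/UPF_iff; rewrite Hk Hj; split.
- split.
  + move=> x y; rewrite [x \in _]in_set [y \in _]in_set => Hx Hy /(congr1 val).
    rewrite !val_JU // => E; apply: val_inj.
    have : all (fun a => all (fun b => (Jof U a == Jof U b) ==> (a == b)) U.1) U.1.
      by case: (HU) => ->; vm_compute.
    move=> /allP H; have /allP := H _ Hx; move=> /(_ _ Hy); rewrite E eqxx.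
    by move/eqP.
  + move=> x; rewrite [x \in _]in_set => Hx.
    rewrite /is_reactant /s_coef val_JU //.
    have : all (fun a => (0 < count_mem a (nth [::] lhs_list (Jof U a)))%N) U.1.
      by case: (HU) => ->; vm_compute.
    by move=> /allP /(_ _ Hx).
- by case: (HU) => ->.
- by case: (HU) => ->; vm_compute.
move=> m Hm Hc.
have : all (fun m => if (0 < count id m < size U.1)%N then
          ~~ sign_alt (count id m) (ldetf Sf (mask m U.1) (mask m U.2)) else true)
         (allmasks (size U.1)).
  by case: (HU) => ->; vm_compute.
by move=> /allP /(_ m); rewrite mem_allmasks Hm eqxx Hc => /(_ isT).
Qed.

Lemma Metzler_list (kap : {set 'I_nS}) (J : 'I_nS -> 'I_nR) p q :
  Metzler (CSmx kap J) -> (p < #|kap|)%N -> (q < #|kap|)%N -> p != q ->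
  0 <= Sf (nth 0%N (ksl kap) p) (nth 0%N (jsl kap J) q).
Proof.
move=> HM Hp Hq Hpq.
have Hne : Ordinal Hp != Ordinal Hq by apply: contra Hpq => /eqP [->].
by have := HM _ _ Hne; rewrite CS_entry.
Qed.

Lemma UPF_not_Metzler kap J : unstable_positive_feedback kap J -> ~ Metzler (CSmx kap J).
Proof.
move=> H HM; have Hs := size_ksl kap.
case: (UPF_class H) => [[Hk Hj]|[Hk Hj]].
  have H4 : #|kap| = 4%N by rewrite -Hs Hk.
  have := Metzler_list (p := 0) (q := 2) HM; rewrite H4 Hk Hj => /(_ isT isT isT).
  by vm_compute.
have H4 : #|kap| = 4%N by rewrite -Hs Hk.
have := Metzler_list (p := 3) (q := 1) HM; rewrite H4 Hk Hj => /(_ isT isT isT).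
by vm_compute.
Qed.

Definition Gtab : seq (seq int) :=
  [:: [:: Negz 0; Negz 0; Posz 0; Posz 0; Posz 0; Posz 1; Posz 0; Posz 0; Posz 0; Posz 0; Posz 0; Posz 0; Posz 0; Posz 0];
    [:: Negz 0; Negz 0; Posz 1; Posz 0; Posz 0; Posz 0; Posz 0; Posz 0; Posz 0; Posz 0; Posz 0; Posz 1; Posz 0; Posz 0];
    [:: Posz 1; Posz 1; Negz 1; Posz 0; Posz 0; Posz 0; Posz 0; Posz 0; Posz 0; Posz 0; Negz 0; Negz 0; Posz 0; Posz 1];
    [:: Posz 0; Posz 0; Posz 0; Negz 1; Posz 0; Posz 1; Posz 1; Posz 0; Posz 0; Negz 0; Posz 0; Posz 0; Posz 0; Posz 0];
    [:: Posz 0; Posz 0; Posz 0; Posz 1; Negz 0; Posz 0; Posz 0; Posz 0; Posz 0; Negz 0; Posz 0; Posz 0; Posz 0; Posz 0];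
    [:: Posz 0; Posz 0; Posz 0; Posz 0; Posz 1; Negz 0; Posz 0; Posz 0; Posz 0; Posz 1; Posz 0; Posz 0; Posz 0; Posz 0];
    [:: Posz 0; Posz 0; Posz 0; Posz 1; Posz 0; Posz 0; Negz 0; Posz 0; Posz 0; Posz 1; Posz 0; Posz 0; Posz 0; Posz 0];
    [:: Posz 0; Posz 0; Posz 0; Posz 0; Posz 0; Posz 0; Posz 0; Negz 0; Negz 0; Posz 0; Posz 0; Posz 0; Posz 1; Posz 0];
    [:: Posz 0; Posz 0; Posz 0; Posz 0; Posz 1; Posz 0; Posz 0; Negz 0; Negz 0; Posz 1; Posz 0; Posz 0; Posz 0; Posz 0];
    [:: Posz 0; Posz 0; Posz 0; Negz 0; Negz 0; Posz 0; Posz 1; Posz 1; Posz 1; Negz 1; Posz 0; Posz 0; Posz 0; Posz 0];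
    [:: Posz 0; Posz 0; Negz 0; Posz 0; Posz 0; Posz 0; Posz 0; Posz 0; Posz 0; Posz 0; Negz 1; Posz 0; Posz 1; Posz 1];
    [:: Posz 0; Posz 0; Negz 0; Posz 0; Posz 0; Posz 0; Posz 0; Posz 0; Posz 0; Posz 0; Posz 1; Negz 0; Posz 0; Posz 0];
    [:: Posz 0; Posz 0; Posz 1; Posz 0; Posz 0; Posz 0; Posz 0; Posz 0; Posz 0; Posz 0; Posz 0; Posz 1; Negz 0; Posz 0];
    [:: Posz 0; Posz 0; Posz 1; Posz 0; Posz 0; Posz 0; Posz 0; Posz 0; Posz 0; Posz 0; Posz 1; Posz 0; Posz 0; Negz 0]].
Definition Qtab : seq (seq int) :=
  [:: [:: Posz 1; Posz 0; Posz 0; Posz 0; Posz 0; Posz 0; Posz 0; Posz 0; Posz 0; Posz 0; Posz 0; Negz 0];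
    [:: Posz 0; Posz 1; Posz 0; Posz 0; Posz 0; Posz 0; Posz 0; Posz 0; Posz 0; Posz 0; Posz 0; Negz 0];
    [:: Posz 0; Posz 0; Posz 1; Negz 0; Posz 0; Posz 0; Posz 0; Posz 0; Posz 0; Posz 0; Posz 0; Posz 0];
    [:: Posz 0; Posz 0; Posz 0; Posz 0; Posz 1; Posz 0; Posz 0; Posz 0; Posz 0; Posz 0; Posz 0; Negz 0];
    [:: Posz 0; Posz 0; Posz 0; Posz 0; Posz 0; Posz 1; Posz 0; Posz 0; Posz 0; Posz 0; Posz 0; Negz 0];
    [:: Posz 0; Posz 0; Posz 0; Posz 0; Posz 0; Posz 0; Posz 1; Posz 0; Posz 0; Posz 0; Posz 0; Negz 0];
    [:: Posz 0; Posz 0; Posz 0; Posz 0; Posz 0; Posz 0; Posz 0; Posz 1; Posz 0; Posz 0; Posz 0; Negz 0];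
    [:: Posz 0; Posz 0; Posz 0; Posz 0; Posz 0; Posz 0; Posz 0; Posz 0; Posz 1; Negz 0; Posz 0; Posz 0];
    [:: Posz 0; Posz 0; Posz 0; Posz 0; Posz 0; Posz 0; Posz 0; Posz 0; Posz 0; Posz 0; Posz 1; Negz 0]].

Definition piv : seq nat := [:: 0; 1; 2; 4; 5; 6; 7; 8; 10]%N.
Definition rws : seq nat := [:: 0; 1; 2; 3; 4; 5; 7; 8; 10]%N.
Definition Pint : 'M[int]_(nS, 9) := \matrix_(i, k) Sf i (nth 0%N piv k).
Definition Qint : 'M[int]_(9, nR) := \matrix_(k, j) nth 0 (nth [::] Qtab k) j.

Lemma PQ_check : all (fun i => all (fun j =>
   Sf i j == foldr (fun k acc => Sf i (nth 0%N piv k) * nth 0 (nth [::] Qtab k) j + acc) 0 (iota 0 9))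
   (iota 0 12)) (iota 0 14).
Proof. by vm_compute. Qed.

Lemma PQ : Smx = Pint *m Qint.
Proof.
apply/matrixP => i j; rewrite !mxE.
rewrite (eq_bigr (fun k : 'I_9 => Sf i (nth 0%N piv k) * nth 0 (nth [::] Qtab k) j)); last first.
  by move=> k _; rewrite !mxE.
rewrite (sum_ord_foldr 9 (fun k => Sf i (nth 0%N piv k) * nth 0 (nth [::] Qtab k) j)).
have /allP /(_ i) := PQ_check; rewrite mem_iota ltn_ord => /(_ isT).
by move=> /allP /(_ j); rewrite mem_iota ltn_ord => /(_ isT) /eqP.
Qed.

Lemma rank_mxsub (F : fieldType) m n m' n' (f : 'I_m' -> 'I_m) (g : 'I_n' -> 'I_n)
   (A : 'M[F]_(m, n)) : (\rank (mxsub f g A) <= \rank A)%N.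
Proof.
rewrite mxsubrc rowsubE; apply: leq_trans (mxrankM_maxr _ _) _.
rewrite -mxrank_tr -[X in (_ <= X)%N]mxrank_tr.
have -> : (mxsub id g A)^T = mxsub g id A^T by apply/matrixP => i j; rewrite !mxE.
by rewrite rowsubE; apply: mxrankM_maxr.
Qed.

Definition fr (i : 'I_9) : 'I_nS := inord (nth 0%N rws i).
Definition gc (i : 'I_9) : 'I_nR := inord (nth 0%N piv i).

Lemma val_fr i : val (fr i) = nth 0%N rws i.
Proof.
rewrite /fr /= inordK //.
have : all (fun x => x < 14)%N rws by [].
by move=> /allP; apply; apply: mem_nth.
Qed.
Lemma val_gc i : val (gc i) = nth 0%N piv i.
Proof.
rewrite /gc /= inordK //.
have : all (fun x => x < 12)%N piv by [].
by move=> /allP; apply; apply: mem_nth.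
Qed.

Lemma detB : \det (mxsub fr gc Smx) = 1.
Proof.
rewrite (@ldetfE 9 _ Sf rws piv).
- by vm_compute.
- by [].
- by [].
by move=> i j; rewrite !mxE -val_fr -val_gc.
Qed.

Lemma rank_SR (R : realType) : \rank (S_R R) = 9%N.
Proof.
apply/eqP; rewrite eqn_leq; apply/andP; split.
  rewrite /S_R PQ map_mxM; apply: leq_trans (mxrankM_maxl _ _) (rank_leq_col _).
apply: leq_trans (rank_mxsub fr gc (S_R R)).
have -> : mxsub fr gc (S_R R) = map_mx (fun z : int => z%:~R) (mxsub fr gc Smx).
  by apply/matrixP => i j; rewrite !mxE.
rewrite mxrank_unit // unitmxE det_map_mx detB unitfE.
by rewrite intr_eq0.
Qed.

Lemma n_cons5 (R : realType) : n_cons R = 5%N.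
Proof. by rewrite /n_cons mxrank_ker rank_SR. Qed.

Definition Gf (x y : nat) : int :=
  foldr (fun k acc => Sf x k * (if (0 < count_mem y (nth [::] lhs_list k))%N then 1 else 0) + acc)
    0 (iota 0 12).
Definition Gtf (x y : nat) : int := nth 0 (nth [::] Gtab x) y.

Lemma G_check : all (fun i => all (fun j => Gf i j == Gtf i j) (iota 0 14)) (iota 0 14).
Proof. by vm_compute. Qed.

Definition Rint : 'M[int]_(nR, nS) := \matrix_(j, m) (if is_reactant j m then 1 else 0).
Definition Gint : 'M[int]_nS := Smx *m Rint.

Lemma Gint_entry (i j : 'I_nS) :
  Gint i j = Gtf (nth 0%N (iota 0 14) i) (nth 0%N (iota 0 14) j).
Proof.
rewrite !nth_iota // !add0n !mxE.
rewrite (eq_bigr (fun k : 'I_nR => Sf i k * (if (0 < count_mem (val j) (nth [::] lhs_list k))%N then 1 else 0))); last first.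
  by move=> k _; rewrite !mxE.
rewrite (sum_ord_foldr nR (fun k => Sf i k * (if (0 < count_mem (val j) (nth [::] lhs_list k))%N then 1 else 0))).
have /allP /(_ i) := G_check; rewrite mem_iota ltn_ord => /(_ isT).
by move=> /allP /(_ j); rewrite mem_iota ltn_ord => /(_ isT) /eqP.
Qed.

Definition a9 : int := foldr (fun m acc =>
   (if count id m == 9%N then ldetf Gtf (mask m (iota 0 14)) (mask m (iota 0 14)) else 0) + acc)
   0 (allmasks 14).
Lemma a9_ok : a9 = 0. Proof. vm_compute. reflexivity. Qed.

Lemma pminor_Gint : pminor_sum 9 Gint = 0.
Proof.
have Hs : size (iota 0 14) = 14%N by rewrite size_iota.
rewrite (@pminor_sumE 14 Gint Gtf (iota 0 14) (iota 0 14) Hs Hs Gint_entry).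
rewrite foldr_sum; exact: a9_ok.
Qed.

Lemma capacity (R : realType) : zero_eig_capacity R.
Proof.
exists (fun _ _ => 1); split => //.
have -> : (nS - n_cons R)%N = 9%N by rewrite n_cons5.
have -> : Gmx (fun _ _ => 1 : R) = map_mx (fun z : int => z%:~R : R) Gint.
  apply/matrixP => i j; rewrite mxE [in RHS]mxE [in RHS]mxE rmorph_sum.
  apply: eq_bigr => k _; rewrite !mxE rmorphM /=.
  by case: is_reactant; rewrite ?rmorph1 ?rmorph0.
rewrite /pminor_sum.
rewrite (eq_bigr (fun I => (\det (psubmx Gint I))%:~R)); last first.
  move=> I _; rewrite -det_map_mx; congr (\det _).
  by apply/matrixP => i j; rewrite !mxE.
by rewrite -rmorph_sum -/(pminor_sum 9 Gint) pminor_Gint rmorph0.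
Qed.

Close Scope ring_scope.

Theorem theorem3p3 :
  (* capacity for zero-eigenvalue bifurcation (differentiation) *)
  (forall R : realType, zero_eig_capacity R) /\
  (* every unstable-positive feedback has motif motif12 or motif21 *)
  (forall kap J, unstable_positive_feedback kap J ->
     motif kap J = motif12 \/ motif kap J = motif21) /\
  (* both motifs do arise from unstable-positive feedbacks *)
  (exists kap J, unstable_positive_feedback kap J /\ motif kap J = motif12) /\
  (exists kap J, unstable_positive_feedback kap J /\ motif kap J = motif21) /\
  (* the motif is non-autocatalytic: no unstable-positive feedback is Metzler *)
  (forall kap J, unstable_positive_feedback kap J -> ~ Metzler (CSmx kap J)) /\
  (* the network (BIII) is non-autocatalytic *)
  non_autocatalytic_network.
Proof.
split; first exact: capacity.
split.
  move=> kap J H; case: (UPF_class H) => E.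
    by left; apply: motif_U12.
  by right; apply: motif_U21.
split.
  have [H E] := @UPF_U U12 (or_introl erefl).
  by exists (spset U12.1), (JU U12); split => //; apply: motif_U12.
split.
  have [H E] := @UPF_U U21 (or_intror erefl).
  by exists (spset U21.1), (JU U21); split => //; apply: motif_U21.
split; first exact: UPF_not_Metzler.
by move=> [kap [J [H HM]]]; apply: (UPF_not_Metzler H HM).
Qed.
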